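(* Let $H = \{h_0 = 0_H, h_1, \dots, h_{t-1}\}$ be a finite abelian group with a fixed enumeration of its elements, and let $\boldsymbol{\lambda} = (\lambda_0,\dots,\lambda_{t-1})$ be a sequence of nonnegative integers. Suppose that for infinitely many primes $p$, every non-zero sum subset of type $\boldsymbol{\lambda}$ of $(\mathbb{Z}_p \times H) \setminus \{0_{\mathbb{Z}_p\times H}\}$ is sequenceable. Then every non-zero sum subset of type $\boldsymbol{\lambda}$ of $(\mathbb{Z} \times H) \setminus \{0_{\mathbb{Z}\times H}\}$ is sequenceable.
   Context: For a finite subset $S$ of an abelian group with $|S| = k$, an ordering $(x_1,\dots,x_k)$ of $S$ has partial sums $(y_0,\dots,y_k)$ with $y_0 = 0$, $y_i = x_1+\cdots+x_i$. It is a sequencing if the $y_i$ are pairwise distinct, and a rotational sequencing if they are pairwise distinct except that $y_k = y_0 = 0$; $S$ is sequenceable if it has one or the other. $S$ is non-zero sum if the sum of its elements is nonzero. For an abelian group $G$ and a finite abelian group $H = \{h_0=0_H,\dots,h_{t-1}\}$, the type of a finite subset $S \subseteq G \times H$ is $(\lambda_0,\dots,\lambda_{t-1})$ where $\lambda_i$ is the number of elements of $S$ whose $H$-coordinate equals $h_i$. *)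

(* Defs.v *)
From HB Require Import structures.
From mathcomp Require Import all_boot all_order all_algebra.
Set Implicit Arguments. Unset Strict Implicit. Unset Printing Implicit Defensive.
Import GRing.Theory.
Local Open Scope ring_scope.

(* A finite subset S of an abelian group G (zmodType) is represented by a
   duplicate-free list; an ordering of S is a list o with perm_eq o S. *)

Section Seq.
Variable G : zmodType.

Definition partial_sums (o : seq G) : seq G :=
  [seq \sum_(x <- take i o) x | i <- iota 0 (size o).+1].

Definition is_sequencing (o : seq G) : bool := uniq (partial_sums o).

(* the y_i are pairwise distinct except y_k = y_0 = 0 *)
Definition is_rotational_sequencing (o : seq G) : bool :=
  uniq (take (size o) (partial_sums o)) && (\sum_(x <- o) x == 0).

Definition sequenceable (S : seq G) : Prop :=
  exists o : seq G, perm_eq o S /\ (is_sequencing o || is_rotational_sequencing o).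

Definition nonzero_sum (S : seq G) : bool := \sum_(x <- S) x != 0.
End Seq.

Definition has_type (T : zmodType) (H : finZmodType) (lam : H -> nat)
  (S : seq (T * H)) : bool :=
  [forall h : H, count (fun x => x.2 == h) S == lam h].

(* Main.v *)
Require Import Defs.
From HB Require Import structures.
From mathcomp Require Import all_boot all_order all_algebra zify.
Set Implicit Arguments. Unset Strict Implicit. Unset Printing Implicit Defensive.
Import Order.TTheory GRing.Theory Num.Theory.
Local Open Scope ring_scope.

Section Phi.
Variables (p : nat) (H : finZmodType).
Definition phi (z : int * H) : ('Z_p * H)%type := (z.1%:~R, z.2).
Lemma phiD x y : phi (x + y) = phi x + phi y.
Proof. by rewrite /phi /= intrD. Qed.
Lemma phi0 : phi 0 = 0.
Proof. by []. Qed.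
Lemma phi_sum s : phi (\sum_(x <- s) x) = \sum_(x <- s) phi x.
Proof. elim: s => [|x s IH]; first by rewrite !big_nil. by rewrite !big_cons phiD IH. Qed.
Lemma ps_map o : partial_sums (map phi o) = map phi (partial_sums o).
Proof.
rewrite /partial_sums size_map -map_comp; apply: eq_map => i /=.
by rewrite -map_take big_map phi_sum.
Qed.
Lemma fst_sum (s : seq (int * H)) : (\sum_(x <- s) x).1 = \sum_(x <- s) x.1.
Proof. elim: s => [|x s IH]; first by rewrite !big_nil. by rewrite !big_cons /= IH. Qed.
Lemma phi_eq0 (p1 : (1 < p)%N) z : `|z.1| < p%:R -> phi z = 0 -> z = 0.
Proof.
case: z => a h /= lt [] ha ->.
have : (absz a %% p = 0)%N.
  case: a lt ha => n lt ha.
    by have := val_Zp_nat p1 n; rewrite -[n%:R]/((Posz n)%:~R) ha.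
  move: ha; rewrite NegzE intrN => /eqP; rewrite oppr_eq0 => /eqP ha.
  by have := val_Zp_nat p1 n.+1; rewrite -[n.+1%:R]/((Posz n.+1)%:~R) ha.
rewrite modn_small; last by move: lt; rewrite -abszE; lia.
by move/eqP; rewrite absz_eq0 => /eqP ->.
Qed.
End Phi.

Lemma phiN p (H : finZmodType) (x : int * H) : phi p (- x) = - phi p x.
Proof. by rewrite /phi /= intrN. Qed.

Theorem proposition4p2 (H : finZmodType) (lam : H -> nat) :
  (forall N : nat, exists p : nat, (N < p)%N /\ prime p /\
     forall S : seq ('Z_p * H)%type,
       uniq S -> 0 \notin S -> nonzero_sum S -> has_type lam S ->
       sequenceable S) ->
  forall S : seq (int * H)%type,
    uniq S -> 0 \notin S -> nonzero_sum S -> has_type lam S ->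
    sequenceable S.
Proof.
move=> hyp S uS S0 Snz St.
set M : int := \sum_(x <- S) `|x.1|.
have M0 : 0 <= M by apply: sumr_ge0 => x _; exact: normr_ge0.
have Mx x : x \in S -> `|x.1| <= M.
  move=> xS; rewrite /M (big_rem x) //= lerDl; apply: sumr_ge0 => y _; exact: normr_ge0.
have [p [Mp [pp hp]]] := hyp (2 * absz M)%N.
have hM : 2 * M < p%:R.
  have e : M = (absz M)%:Z by rewrite gez0_abs.
  rewrite e; move: Mp; lia.
have p1 : (1 < p)%N by apply: prime_gt1.
have inj : {in S &, injective (@phi p H)}.
  move=> x y xS yS e.
  have : @phi p H (x - y) = 0 by rewrite phiD phiN e subrr.
  move=> e0; apply/eqP; rewrite -subr_eq0; apply/eqP; apply: (phi_eq0 p1) e0.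
  apply: (le_lt_trans (ler_normB _ _)).
  have := Mx _ xS; have := Mx _ yS; move: hM; rewrite natz; move: (`|x.1|) (`|y.1|) => a b. lia.
set S' := map (@phi p H) S.
have sumS : \sum_(x <- S') x = @phi p H (\sum_(x <- S) x) by rewrite big_map phi_sum.
have bsum : `|(\sum_(x <- S) x).1| < p%:R.
  rewrite fst_sum; apply: (le_lt_trans (ler_norm_sum _ _ _)).
  rewrite -/M; move: hM M0; lia.
have [o' [po' so']] : sequenceable S'.
  apply: hp.
  - by rewrite map_inj_in_uniq.
  - apply/mapP => -[x xS /esym e].
    have x0 : x = 0 by apply: (phi_eq0 p1) => //; have := Mx _ xS; move: hM M0; rewrite natz; move: (`|x.1|) => a; lia.
    by move: S0; rewrite -x0 xS.
  - rewrite /nonzero_sum sumS; apply/negP => /eqP e.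
    by move: Snz; rewrite /nonzero_sum (phi_eq0 p1 bsum e) eqxx.
  - apply/forallP => h; rewrite count_map; exact: (forallP St h).
pose g y := nth 0 S (index y S').
have gK : {in S, cancel (@phi p H) g}.
  move=> x xS; apply: inj => //.
    by rewrite /g mem_nth // -(size_map (@phi p H)) index_mem map_f.
  by rewrite /g -(nth_map 0 0) ?nth_index ?map_f // -(size_map (@phi p H)) index_mem map_f.
have phigK : {in S', cancel g (@phi p H)}.
  by move=> y yS; rewrite /g -(nth_map 0 0) ?nth_index // -(size_map (@phi p H)) index_mem.
set o := map g o'.
have eo : map (@phi p H) o = o'.
  rewrite -map_comp map_id_in // => y yo; apply: phigK; by rewrite -(perm_mem po').
have po : perm_eq o S.
  have -> : S = map g S' by rewrite -map_comp map_id_in // => x xS; apply: gK.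
  exact: perm_map.
exists o; split => //.
move: so'; rewrite -eo /is_sequencing /is_rotational_sequencing ps_map size_map -map_take.
case/orP => [/map_uniq -> // | /andP [/map_uniq u e]].
apply/orP; right; rewrite u /=.
rewrite big_map -phi_sum in e.
rewrite (perm_big _ po) /=; apply/eqP; apply: (phi_eq0 p1 bsum).
by rewrite -(perm_big _ po); apply/eqP.
Qed.
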